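(* Let $f,g\colon\mathbb{R}^3\to\mathbb{R}$ be continuous (globally Lipschitz) with $|f(x,y,z)|,|g(x,y,z)|<M$ everywhere, let $\varepsilon>0$, and consider solutions $(x(t),y(t),z(t))$ of \[ \dot x = f(x,y,z),\qquad \dot y = g(x,y,z),\qquad \varepsilon\dot z = x+|z|. \] Then the sets $\{z>-x+M\varepsilon\}$ and $\{z>x-M\varepsilon\}$ are forward invariant: once a trajectory enters one of them, it stays in it for all later times. In particular, if a solution satisfies $x(\tau)<0$ and $z(\tau)=0$, then $z(t)>x(t)-M\varepsilon$ for all $t\ge\tau$, and if moreover $z(t_0)>-x(t_0)+M\varepsilon$ for some $t_0\ge\tau$, then $z(t)>0$ for all $t\ge t_0$. *)

(* Defs.v *)
From Stdlib Require Import Reals Lra.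
Open Scope R_scope.

Definition dist3 (x1 y1 z1 x2 y2 z2 : R) : R :=
  sqrt ((x1 - x2)^2 + (y1 - y2)^2 + (z1 - z2)^2).

Definition lipschitz3 (h : R -> R -> R -> R) : Prop :=
  exists L : R, 0 <= L /\
    forall x1 y1 z1 x2 y2 z2,
      Rabs (h x1 y1 z1 - h x2 y2 z2) <= L * dist3 x1 y1 z1 x2 y2 z2.

Definition is_solution (f g : R -> R -> R -> R) (eps : R)
  (x y z : R -> R) : Prop :=
  forall t : R,
    derivable_pt_lim x t (f (x t) (y t) (z t)) /\
    derivable_pt_lim y t (g (x t) (y t) (z t)) /\
    derivable_pt_lim z t ((x t + Rabs (z t)) / eps).

(* Main.v *)
Require Import Defs.
From Stdlib Require Import Reals Lra.
Open Scope R_scope.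

Lemma incr_lemma (v dv : R -> R) (H : forall t, derivable_pt_lim v t (dv t))
  (Hp : forall t, dv t > 0) a b : a < b -> v a < v b.
Proof.
  intros hab.
  set (pr := fun t => exist (fun l => derivable_pt_abs v t l) (dv t) (H t) : derivable_pt v t).
  destruct (MVT_cor1 v a b pr hab) as [c [Hc _]].
  simpl in Hc. specialize (Hp c). nra.
Qed.

Lemma gronwall (u du : R -> R) (c : R) (H : forall t, derivable_pt_lim u t (du t))
  (Hd : forall t, du t > c * u t) a b : a <= b -> u a > 0 -> u b > 0.
Proof.
  intros hab hua.
  set (v := fun t => u t * exp (- c * t)).
  assert (Hv : forall t, derivable_pt_lim v t (du t * exp (- c * t) + u t * (exp (- c * t) * (- c)))).
  { intro t. unfold v. apply (derivable_pt_lim_mult u (fun s => exp (- c * s))); [apply H|].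
    assert (Hl : derivable_pt_lim (fun s => - c * s) t (- c * 1)).
    { apply derivable_pt_lim_scal. apply derivable_pt_lim_id. }
    pose proof (derivable_pt_lim_comp _ exp t _ _ Hl (derivable_pt_lim_exp (- c * t))) as Hc.
    rewrite Rmult_1_r in Hc. exact Hc. }
  destruct (Rle_lt_or_eq_dec _ _ hab) as [hlt|heq]; [|subst; auto].
  assert (Hlt := incr_lemma v _ Hv).
  assert (vab : v a < v b).
  { apply Hlt; auto. intro t. specialize (Hd t). pose proof (exp_pos (- c * t)). nra. }
  unfold v in vab. pose proof (exp_pos (- c * a)). pose proof (exp_pos (- c * b)).
  assert (0 < u a * exp (- c * a)) by nra.
  nra.
Qed.

Theorem proposition1 (f g : R -> R -> R -> R) (M eps : R)
  (x y z : R -> R)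
  (hf : lipschitz3 f) (hg : lipschitz3 g)
  (hfM : forall a b c, Rabs (f a b c) < M)
  (hgM : forall a b c, Rabs (g a b c) < M)
  (heps : 0 < eps)
  (hsol : is_solution f g eps x y z) :
  (forall t0 t, t0 <= t -> z t0 > - x t0 + M * eps -> z t > - x t + M * eps) /\
  (forall t0 t, t0 <= t -> z t0 > x t0 - M * eps -> z t > x t - M * eps) /\
  (forall tau, x tau < 0 -> z tau = 0 ->
     (forall t, tau <= t -> z t > x t - M * eps) /\
     (forall t0, tau <= t0 -> z t0 > - x t0 + M * eps ->
        forall t, t0 <= t -> z t > 0)).
Proof.
  assert (P1 : forall t0 t, t0 <= t -> z t0 > - x t0 + M * eps -> z t > - x t + M * eps).
  { intros t0 t h1 h2.
    cut (z t + x t - M * eps > 0); [lra|].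
    apply (gronwall (fun s => z s + x s - M * eps)
      (fun s => (x s + Rabs (z s)) / eps + f (x s) (y s) (z s)) (/ eps)) with t0; auto; [| |lra].
    - intro s. destruct (hsol s) as [hx [_ hz]].
      replace ((x s + Rabs (z s)) / eps + f (x s) (y s) (z s))
        with ((x s + Rabs (z s)) / eps + f (x s) (y s) (z s) - 0) by ring.
      apply derivable_pt_lim_minus; [|apply derivable_pt_lim_const].
      apply derivable_pt_lim_plus; auto.
    - intro s. pose proof (Rle_abs (z s)). pose proof (hfM (x s) (y s) (z s)).
      pose proof (Rabs_def2 _ _ H0) as [_ Hf].
      apply Rlt_gt. apply Rminus_lt. unfold Rdiv.
      replace (/ eps * (z s + x s - M * eps) - ((x s + Rabs (z s)) * / eps + f (x s) (y s) (z s)))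
        with ((z s - Rabs (z s)) * / eps - (M * (eps * / eps) + f (x s) (y s) (z s))) by ring.
      rewrite Rinv_r by lra. pose proof (Rinv_0_lt_compat _ heps). nra. }
  assert (P2 : forall t0 t, t0 <= t -> z t0 > x t0 - M * eps -> z t > x t - M * eps).
  { intros t0 t h1 h2.
    cut (z t - x t + M * eps > 0); [lra|].
    apply (gronwall (fun s => z s - x s + M * eps)
      (fun s => (x s + Rabs (z s)) / eps - f (x s) (y s) (z s)) (- / eps)) with t0; auto; [| |lra].
    - intro s. destruct (hsol s) as [hx [_ hz]].
      replace ((x s + Rabs (z s)) / eps - f (x s) (y s) (z s))
        with ((x s + Rabs (z s)) / eps - f (x s) (y s) (z s) + 0) by ring.
      apply derivable_pt_lim_plus; [|apply derivable_pt_lim_const].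
      apply derivable_pt_lim_minus; auto.
    - intro s. pose proof (Rle_abs (- z s)). rewrite Rabs_Ropp in H. pose proof (hfM (x s) (y s) (z s)).
      pose proof (Rabs_def2 _ _ H0) as [Hf _].
      apply Rlt_gt. apply Rminus_lt. unfold Rdiv.
      replace (- / eps * (z s - x s + M * eps) - ((x s + Rabs (z s)) * / eps - f (x s) (y s) (z s)))
        with ((- z s - Rabs (z s)) * / eps - (M * (eps * / eps) - f (x s) (y s) (z s))) by ring.
      rewrite Rinv_r by lra. pose proof (Rinv_0_lt_compat _ heps). nra. }
  split; [exact P1|]. split; [exact P2|].
  intros tau hx hz.
  assert (HM : 0 < M) by (pose proof (hfM 0 0 0); pose proof (Rabs_pos (f 0 0 0)); lra).
  assert (Q : forall t, tau <= t -> z t > x t - M * eps).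
  { intros t ht. apply P2 with tau; auto. rewrite hz. nra. }
  split; auto.
  intros t0 h0 h1 t ht. pose proof (P1 t0 t ht h1). pose proof (Q t ltac:(lra)). lra.
Qed.
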